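(* Let $H=(V,F)$ be a finite hypergraph, $(r_i)_{i\in V}$ positive integers, and $\boldsymbol u=\{u^\alpha_{i\to j}\}$ arbitrary matrix weights with $u^\alpha_{i\to j}\in\mathbb{C}^{r_j\times r_i}$ ($\alpha\in F$, distinct $i,j\in\alpha$). Fix norms on each $\mathbb{C}^{r_i}$, let $\|\cdot\|$ be the induced operator norms, and let $\|\boldsymbol u\|=\{\|u^\alpha_{i\to j}\|\}$ be the corresponding scalar weights. Then $$\rho(\mathcal M(\boldsymbol u))\le\rho(\mathcal M(\|\boldsymbol u\|))\le\max_{\alpha,i,j}\|u^\alpha_{i\to j}\|\,\rho(\mathcal M),$$ where $\rho$ denotes spectral radius.
   Context: Directed edges $\vec E=\{(\alpha\to i):i\in\alpha\in F\}$ with $s(\alpha\to i)=\alpha$, $t(\alpha\to i)=i$; $e'\rightharpoonup e$ means $t(e')\in s(e)$, $t(e')\ne t(e)$, $s(e')\ne s(e)$. For matrix weights $\boldsymbol v$, $\mathcal M(\boldsymbol v)$ acts on $\bigoplus_e\mathbb{C}^{r_{t(e)}}$ by $(\mathcal M(\boldsymbol v)f)(e)=\sum_{e':e'\rightharpoonup e}v^{s(e)}_{t(e')\to t(e)}f(e')$; for scalar weights (all $r_i=1$) it is a $|\vec E|\times|\vec E|$ matrix. $\mathcal M$ (the directed edge matrix) denotes $\mathcal M(\boldsymbol 1)$ with all $r_i=1$ and all weights equal to $1$. *)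

(* Defs.v *)
From mathcomp Require Import all_boot all_order all_algebra.
From mathcomp Require Import all_classical all_reals.
From mathcomp Require Import complex.
Set Implicit Arguments. Unset Strict Implicit. Unset Printing Implicit Defensive.
Import Order.TTheory GRing.Theory Num.Theory.
Local Open Scope ring_scope.
Local Open Scope classical_set_scope.

Section Hypergraph.
Variable R : realType.
Local Notation C := (R[i]).

(* Spectral radius: sup of moduli of the (complex) eigenvalues; 0 for a 0x0 matrix. *)
Definition specrad (n : nat) (A : 'M[C]_n) : R :=
  sup [set Normc.normc a | a in [set a | eigenvalue A a]].

Definition is_vnorm (n : nat) (N : 'cV[C]_n -> R) : Prop :=
  [/\ (forall x, 0 <= N x),
      (forall x, N x = 0 -> x = 0),
      (forall (a : C) x, N (a *: x) = Normc.normc a * N x) &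
      (forall x y, N (x + y) <= N x + N y)].

Definition opnorm (m n : nat) (Nn : 'cV[C]_n -> R) (Nm : 'cV[C]_m -> R)
  (A : 'M[C]_(m, n)) : R :=
  sup [set Nm (A *m x) | x in [set x | Nn x <= 1]].

Variables (V : finType) (F : {set {set V}}).

(* Directed edges (alpha -> i), alpha \in F, i \in alpha. *)
Definition dedge : finType := {p : {set V} * V | (p.1 \in F) && (p.2 \in p.1)}.
Definition src (e : dedge) : {set V} := (val e).1.
Definition tgt (e : dedge) : V := (val e).2.

Definition nbr (e' e : dedge) : bool :=
  [&& tgt e' \in src e, tgt e' != tgt e & src e' != src e].

(* Index set of  ⊕_e C^{r_{t(e)}}. *)
Definition bidx (r : V -> nat) : finType := {e : dedge & 'I_(r (tgt e))}.

(* The (block) directed edge matrix M(v), for matrix weights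
   v a i j : C^{r_j x r_i}  (i.e. v^a_{i -> j}). *)
Definition Mop (r : V -> nat) (v : forall (a : {set V}) (i j : V), 'M[C]_(r j, r i))
  : 'M[C]_#|bidx r| :=
  \matrix_(x, y)
    (let p := enum_val x in let q := enum_val y in
     if nbr (tag q) (tag p)
     then v (src (tag p)) (tgt (tag q)) (tgt (tag p)) (tagged p) (tagged q)
     else 0).

(* Scalar weights as 1x1 matrix weights (all r_i = 1). *)
Definition scalw (w : {set V} -> V -> V -> R) :
  forall (a : {set V}) (i j : V), 'M[C]_((fun _ : V => 1%N) j, (fun _ : V => 1%N) i) :=
  fun a i j => (Complex (w a i j) 0)%:M.

Definition maxw (w : {set V} -> V -> V -> R) : R :=
  \big[Num.max/0]_(a in F) \big[Num.max/0]_(i in a) \big[Num.max/0]_(j in a | j != i) w a i j.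

End Hypergraph.

(* Main.v *)
Require Import Defs.
From mathcomp Require Import all_boot all_order all_algebra.
From mathcomp Require Import all_classical all_reals.
From mathcomp Require Import complex.
From mathcomp Require Import topology normedtype derive.
From mathcomp Require Import lra.
From mathcomp Require Import matrix_topology matrix_normedtype.
Import numFieldTopology.Exports numFieldNormedType.Exports.
Import Order.TTheory GRing.Theory Num.Theory.
Local Open Scope ring_scope.
Local Open Scope complex_scope.
Set Implicit Arguments. Unset Strict Implicit. Unset Printing Implicit Defensive.

Section PartA.
Local Open Scope classical_set_scope.
Variable R : realType.
Local Notation C := (R[i]).

Lemma normcCE (z : C) : (Normc.normc z)%:C = `|z|. Proof. by []. Qed.

Lemma normc_ge0 (z : C) : 0 <= Normc.normc z.
Proof. by rewrite -ler0c normcCE. Qed.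

Lemma normcRC (a : R) : Normc.normc a%:C = `|a|.
Proof. by rewrite /Normc.normc /= expr0n /= addr0 sqrtr_sqr. Qed.

Lemma normc_le_ReIm (a b : R) : Normc.normc (a +i* b) <= `|a| + `|b|.
Proof.
rewrite /Normc.normc -(@ger0_norm _ (`|a| + `|b|)) ?addr_ge0 //.
rewrite -sqrtr_sqr ler_sqrt ?addr_ge0 ?sqr_ge0 //.
rewrite sqrrD !real_normK ?num_real // lerD2r lerDl mulrn_wge0 // mulr_ge0 //.
Qed.

Variable n : nat.
Variable N : 'cV[C]_n -> R.
Hypothesis HN : is_vnorm N.

Lemma vn_ge0 x : 0 <= N x. Proof. by case: HN => H _ _ _; apply: H. Qed.
Lemma vn_eq0 x : N x = 0 -> x = 0. Proof. by case: HN => _ H _ _; apply: H. Qed.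
Lemma vnZ a x : N (a *: x) = Normc.normc a * N x. Proof. by case: HN => _ _ H _; apply: H. Qed.
Lemma vnD x y : N (x + y) <= N x + N y. Proof. by case: HN => _ _ _ H; apply: H. Qed.
Lemma vn0 : N 0 = 0.
Proof. by rewrite -(scale0r (0 : 'cV[C]_n)) vnZ Normc.normc0 mul0r. Qed.
Lemma vnN x : N (- x) = N x.
Proof. by rewrite -scaleN1r vnZ (normcN (1 : C)) Normc.normc1 mul1r. Qed.

Lemma vn_sum (I : finType) (P : pred I) (f : I -> 'cV[C]_n) :
  N (\sum_(i | P i) f i) <= \sum_(i | P i) N (f i).
Proof.
elim/big_rec2: _ => [|i y1 y2 _ H]; first by rewrite vn0.
by apply: le_trans (vnD _ _) _; rewrite lerD2l.
Qed.

Lemma vn_diff x y : `|N x - N y| <= N (x - y).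
Proof.
have h1 : N x <= N (x - y) + N y by rewrite -{1}(subrK y x); apply: vnD.
have h2 : N y <= N (x - y) + N x.
  by rewrite -(vnN (x - y)) opprB -{1}(subrK x y); apply: vnD.
rewrite ler_norml; apply/andP; split; lra.
Qed.

Lemma vn_upper x : N x <= \sum_i Normc.normc (x i 0) * N (delta_mx i 0).
Proof.
have -> : x = \sum_i x i 0 *: delta_mx i 0.
  apply/matrixP => i j; rewrite summxE (bigD1 i) //= big1 ?addr0.
    by rewrite !mxE !ord1 !eqxx mulr1.
  by move=> k /negbTE ki; rewrite !mxE eq_sym ki mulr0.
apply: le_trans (vn_sum _ _) _; apply: ler_sum => i _.
rewrite vnZ ler_wpM2r ?vn_ge0 //.
rewrite summxE (bigD1 i) //= big1 ?addr0.
  by rewrite !mxE !eqxx mulr1.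
by move=> k /negbTE ki; rewrite !mxE eq_sym ki mulr0.
Qed.


Definition phi (z : 'rV[R]_(n + n)) : 'cV[C]_n :=
  \col_i ((z 0 (lshift n i)) +i* (z 0 (rshift n i))).
Definition psi (x : 'cV[C]_n) : 'rV[R]_(n + n) :=
  \row_j (match @fintype.split n n j with inl i => complex.Re (x i 0) | inr i => complex.Im (x i 0) end).

Lemma phiB z w : phi (z - w) = phi z - phi w.
Proof. by apply/matrixP => i j; rewrite !mxE. Qed.

Lemma phiZ (a : R) z : phi (a *: z) = a%:C *: phi z.
Proof. by apply/matrixP => i j; rewrite !mxE; simpc. Qed.

Lemma phi_psi x : phi (psi x) = x.
Proof.
apply/matrixP => i j; rewrite !mxE (unsplitK (inl i)) (unsplitK (inr i)) ord1.
by case: (x i 0).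
Qed.

Lemma entry_le_mx (z : 'rV[R]_(n + n)) j : `|z 0 j| <= `|z|.
Proof.
rewrite [leRHS]/Num.norm /= mx_normrE.
exact: (le_bigmax _ (fun ij : 'I_1 * 'I_(n + n) => `|z ij.1 ij.2|) (0, j)).
Qed.

Definition L0 := \sum_i N (delta_mx i (0 : 'I_1)).

Lemma L0_ge0 : 0 <= L0.
Proof. by apply: sumr_ge0 => i _; apply: vn_ge0. Qed.

Lemma phi_bound z : N (phi z) <= (2 * L0) * `|z|.
Proof.
apply: le_trans (vn_upper _) _.
rewrite mulrAC /L0 mulr_sumr; apply: ler_sum => i _.
rewrite ler_wpM2r ?vn_ge0 // mxE.
apply: le_trans (normc_le_ReIm _ _) _.
by rewrite mulr2n mulrDl !mul1r lerD ?entry_le_mx.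
Qed.

Definition fN (z : 'rV[R]_(n + n)) : R := N (phi z).

Lemma fN_cont : continuous fN.
Proof.
move=> z; apply/(@cvgrPdist_lt _ _ _ (nbhs z) (nbhs_filter z)) => e e0.
have L1 : 0 < 2 * L0 + 1 by rewrite ltr_wpDl ?mulr_ge0 ?L0_ge0.
near=> t.
apply: le_lt_trans (vn_diff _ _) _.
rewrite -phiB; apply: le_lt_trans (phi_bound _) _.
apply: (@le_lt_trans _ _ ((2 * L0 + 1) * `|z - t|)).
  by rewrite ler_wpM2r ?lerDl.
rewrite -ltr_pdivlMl // mulrC.
near: t.
have := @near_ball _ _ z _ (divr_gt0 e0 L1).
by apply: filterS => t; rewrite -ball_normE /ball_.
Unshelve. all: end_near.
Qed.


Lemma psi_phi z : psi (phi z) = z.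
Proof.
apply/rowP => j; rewrite mxE -(splitK j).
by case: (fintype.split j) => k; rewrite unsplitK !mxE /= ?ord1.
Qed.

Lemma psi0 : psi 0 = 0.
Proof. by apply/rowP => j; rewrite !mxE; case: (fintype.split j) => k; rewrite mxE. Qed.

Lemma vnorm_lb : exists K : R, 0 < K /\ forall (x : 'cV[C]_n) i, Normc.normc (x i 0) <= K * N x.
Proof.
have [n0|npos] := posnP n.
  by exists 1; split => // x [i hi]; exfalso; move: hi; rewrite n0.
pose S := [set z : 'rV[R]_(n + n) | `|z| = 1].
have S0 : S !=set0.
  pose z0 := const_mx 1 : 'rV[R]_(n + n).
  have z0n : `|z0| != 0.
    rewrite normr_eq0; apply/eqP => /rowP /(_ (lshift n (Ordinal npos))).
    by rewrite !mxE => /eqP; rewrite oner_eq0.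
  exists (`|z0|^-1 *: z0); rewrite /S /= normrZ normrV ?unitfE // normr_id.
  by rewrite mulVf.
have cS : compact S.
  apply: bounded_closed_compact.
    rewrite /= /bounded_near; near=> M; move=> z /= Sz; rewrite Sz.
    near: M; exact: nbhs_pinfty_ge.
  have := (continuous_closedP (Num.norm : 'rV[R]_(n + n) -> R)).1 (@norm_continuous _ _) _ (@closed_eq R 1).
  by [].
have cf : {within S, continuous fN} by apply: continuous_subspaceT; exact: fN_cont.
have [c cS' cmin] := compact_EVT_min S0 cS cf.
have Sc : `|c| = 1 by move: cS'; rewrite inE.
have m0 : 0 < fN c.
  rewrite lt_def vn_ge0 andbT; apply/eqP => /vn_eq0 pc.
  by move: Sc; rewrite -(psi_phi c) pc psi0 normr0 => /eqP; rewrite eq_sym oner_eq0.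
exists (2 / fN c); split; first by rewrite divr_gt0.
move=> x i.
pose z := psi x.
have [z0|z0] := eqVneq z 0.
  have x0 : x = 0 by rewrite -(phi_psi x) -/z z0; apply/matrixP => i' j'; rewrite !mxE.
  by rewrite x0 mxE Normc.normc0 mulr_ge0 ?vn_ge0 // divr_ge0 // ltW.
have zpos : 0 < `|z| by rewrite normr_gt0.
have Sz : S (`|z|^-1 *: z).
  by rewrite /S /= normrZ ger0_norm ?invr_ge0 // mulVf // gt_eqF.
have h1 : fN c <= `|z|^-1 * N x.
  have := cmin _ (mem_set Sz); rewrite /fN phiZ vnZ normcRC phi_psi.
  by rewrite ger0_norm // invr_ge0 ltW.
have h2 : Normc.normc (x i 0) <= 2 * `|z|.
  rewrite -{1}(phi_psi x) mxE; apply: le_trans (normc_le_ReIm _ _) _.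
  by rewrite mulr2n mulrDl mul1r lerD ?entry_le_mx.
apply: le_trans h2 _.
rewrite ler_pdivlMl // in h1.
by rewrite -mulrA ler_wpM2l // ler_pdivlMl // mulrC.
Unshelve. all: end_near.
Qed.

End PartA.

Section PartB.
Local Open Scope classical_set_scope.
Variable R : realType.
Local Notation C := (R[i]).

Lemma mulmx_col_sum m n (A : 'M[C]_(m, n)) (x : 'cV[C]_n) :
  A *m x = \sum_j x j 0 *: col j A.
Proof.
apply/matrixP => i k; rewrite !mxE summxE; apply: eq_bigr => j _.
by rewrite !mxE !ord1 mulrC.
Qed.

Lemma opnorm_spec m n (Nn : 'cV[C]_n -> R) (Nm : 'cV[C]_m -> R) (A : 'M[C]_(m, n)) :
  is_vnorm Nn -> is_vnorm Nm ->
  0 <= opnorm Nn Nm A /\ forall x, Nm (A *m x) <= opnorm Nn Nm A * Nn x.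
Proof.
move=> hn hm.
have [K [K0 HK]] := vnorm_lb hn.
pose S := [set Nm (A *m x) | x in [set x | Nn x <= 1]].
have bnd x : Nm (A *m x) <= K * Nn x * \sum_j Nm (col j A).
  rewrite mulmx_col_sum; apply: le_trans (vn_sum hm _ _) _.
  rewrite mulr_sumr; apply: ler_sum => j _; rewrite vnZ // ler_wpM2r //.
  exact: vn_ge0.
have hS : has_sup S.
  split; first by exists (Nm (A *m 0)), 0 => //=; rewrite vn0.
  exists (K * \sum_j Nm (col j A)) => _ [x /= x1 <-].
  apply: le_trans (bnd x) _; rewrite mulrAC; apply: ler_piMr => //.
  apply: mulr_ge0; [exact: ltW | apply: sumr_ge0 => j _; exact: vn_ge0].
have ub := sup_upper_bound hS.
have s0 : 0 <= opnorm Nn Nm A.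
  by apply: ub; exists 0; rewrite /= ?vn0 // mulmx0 vn0.
split => // x.
have [x0|x0] := eqVneq x 0.
  by rewrite x0 mulmx0 !vn0 // mulr0.
have nx : 0 < Nn x by rewrite lt_def vn_ge0 // andbT; apply/eqP => /(vn_eq0 hn); apply/eqP.
have ninv : `|(Nn x)^-1| = (Nn x)^-1 by rewrite ger0_norm // invr_ge0 ltW.
have Sx' : S (Nm (A *m (((Nn x)^-1)%:C *: x))).
  exists (((Nn x)^-1)%:C *: x) => //=.
  by rewrite vnZ // normcRC ninv mulVf // gt_eqF.
have := ub _ Sx'.
rewrite -scalemxAr vnZ // normcRC ninv => h.
have := ler_wpM2r (ltW nx) h.
by rewrite mulrAC mulVf ?gt_eqF // mul1r.
Qed.

End PartB.

Section PartC.
Variable R : realType.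
Local Notation C := (R[i]).

Lemma char_poly_tr n (A : 'M[C]_n) : char_poly A^T = char_poly A.
Proof.
rewrite /char_poly -(det_tr (char_poly_mx A)); congr (\det _).
by rewrite /char_poly_mx linearB /= tr_scalar_mx map_trmx.
Qed.

Lemma eig_col n (A : 'M[C]_n) a :
  eigenvalue A a -> exists2 x : 'cV[C]_n, x != 0 & A *m x = a *: x.
Proof.
rewrite eigenvalue_root_char -char_poly_tr -eigenvalue_root_char.
move=> /eigenvalueP [v vA v0]; exists v^T.
  by apply: contra v0 => /eqP h; apply/eqP; rewrite -(trmxK v) h trmx0.
by rewrite -{1}(trmxK A) -trmx_mul vA linearZ.
Qed.

Lemma eig_roots n (A : 'M[C]_n) : exists r : seq C,
  char_poly A = \prod_(z <- r) ('X - z%:P) /\ forall a, eigenvalue A a = (a \in r).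
Proof.
have [r hr] := closed_field_poly_normal (char_poly A).
have hc : char_poly A = \prod_(z <- r) ('X - z%:P).
  by rewrite {1}hr (monicP (char_poly_monic A)) scale1r.
exists r; split => // a.
by rewrite eigenvalue_root_char hc root_prod_XsubC.
Qed.

Local Open Scope classical_set_scope.

Lemma specrad_hassup n (A : 'M[C]_n) a : eigenvalue A a ->
  has_sup [set Normc.normc a | a in [set a | eigenvalue A a]].
Proof.
move=> ha; split; first by exists (Normc.normc a), a.
have [r [_ hr]] := eig_roots A.
exists (\sum_(z <- r) Normc.normc z) => _ [b /= hb <-].
rewrite hr in hb; rewrite (big_rem b) //= lerDl sumr_ge0 // => z _.
exact: normc_ge0.
Qed.


Lemma specrad_ub n (A : 'M[C]_n) a : eigenvalue A a -> Normc.normc a <= specrad A.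
Proof.
move=> ha; apply: (sup_upper_bound (specrad_hassup ha)).
by exists a.
Qed.

Lemma specrad_ge0 n (A : 'M[C]_n) : 0 <= specrad A.
Proof.
case: (pselect (exists a, eigenvalue A a)) => [[a ha]|H].
  exact: le_trans (normc_ge0 a) (specrad_ub ha).
rewrite /specrad.
have -> : [set Normc.normc a | a in [set a | eigenvalue A a]] = set0.
  by apply/seteqP; split => // x [a ha _]; exfalso; apply: H; exists a.
by rewrite sup0.
Qed.

Lemma specrad_le n (A : 'M[C]_n) (c : R) : 0 <= c ->
  (forall a, eigenvalue A a -> Normc.normc a <= c) -> specrad A <= c.
Proof.
move=> c0 H.
case: (pselect (exists a, eigenvalue A a)) => [[a ha]|H'].
  apply: ge_sup; first by exists (Normc.normc a), a.
  by move=> _ [b hb <-]; apply: H.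
rewrite /specrad.
have -> : [set Normc.normc a | a in [set a | eigenvalue A a]] = set0.
  by apply/seteqP; split => // x [a ha _]; exfalso; apply: H'; exists a.
by rewrite sup0.
Qed.

Local Close Scope classical_set_scope.

Definition summ (a : nat -> C) := exists M : C, forall K, \sum_(k < K) `|a k| <= M.

Lemma summ_rec (l : C) (a b : nat -> C) : `|l| < 1 ->
  (forall k, a k.+1 = l * a k + b k) -> summ b -> summ a.
Proof.
move=> l1 hab [M hM].
have M0 : 0 <= M by apply: le_trans (hM 0%N); rewrite big_ord0.
have d0 : 0 < 1 - `|l| by rewrite subr_gt0.
exists ((`|a 0%N| + M) / (1 - `|l|)) => K.
case: K => [|K]; first by rewrite big_ord0; apply: divr_ge0; [rewrite addr_ge0 | exact: ltW].
set S := \sum_(k < K.+1) `|a k|.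
have hS : S <= `|a 0%N| + `|l| * S + M.
  rewrite /S big_ord_recl /= -addrA lerD2l.
  have h1 : \sum_(i < K) `|a (bump 0 i)| <= \sum_(i < K) (`|l| * `|a i| + `|b i|).
    apply: ler_sum => i _; rewrite /bump /= add1n hab.
    by apply: le_trans (ler_normD _ _) _; rewrite normrM.
  apply: le_trans h1 _; rewrite big_split /= lerD ?hM //.
  rewrite -mulr_sumr ler_wpM2l //.
  have -> : `|a 0%N| + \sum_(i < K) `|a (bump 0 i)| = \sum_(i < K.+1) `|a i|.
    by rewrite big_ord_recl.
  by rewrite big_ord_recr /= lerDl.
rewrite ler_pdivlMr //.
rewrite mulrBr mulr1 lerBlDr.
by apply: le_trans hS _; rewrite -addrA (addrC _ M) addrA (mulrC `|l|).
Qed.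

Lemma claim n (M : 'M[C]_n.+1) (L : seq C) : all (fun l => `|l| < 1) L ->
  forall w : 'cV[C]_n.+1,
  (forall i, summ (fun k => ((M ^+ k * \prod_(l <- L) (M - l%:M)) *m w) i 0)) ->
  forall i, summ (fun k => (M ^+ k *m w) i 0).
Proof.
elim: L => [|l L IH] /=.
  by move=> _ w H i; have := H i; under eq_fun do rewrite big_nil mulr1.
move=> /andP [hl hL] w H i; apply: IH => // j.
apply: (@summ_rec l _ (fun k => ((M ^+ k * ((M - l%:M) * \prod_(l0 <- L) (M - l0%:M))) *m w) j 0)) => //.
  move=> k.
  have -> : M ^+ k * ((M - l%:M) * \prod_(l0 <- L) (M - l0%:M)) =
    M ^+ k.+1 * \prod_(l0 <- L) (M - l0%:M) - l *: (M ^+ k * \prod_(l0 <- L) (M - l0%:M)).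
    rewrite mulrBl mulrBr exprSr -mulrA; congr (_ - _).
    by rewrite -mulmxE mul_scalar_mx scalerAr mulmxE.
  by rewrite mulmxBl -scalemxAl !mxE [RHS]addrC subrK.
by move: (H j); under eq_fun do rewrite big_cons.
Qed.


Lemma specrad_lb n (B : 'M[C]_n) (y : 'cV[C]_n) (mu : R) :
  (forall i j, 0 <= B i j) -> (forall i, 0 <= y i 0) -> y != 0 -> 0 <= mu ->
  (forall i, mu%:C * y i 0 <= (B *m y) i 0) -> mu <= specrad B.
Proof.
move=> Bge0 yge0 yn0 mu0 hy.
have [->|mun0] := eqVneq mu 0; first exact: specrad_ge0.
have mupos : 0 < mu by rewrite lt_def mun0.
rewrite leNgt; apply/negP => hlt.
case: n B y Bge0 yge0 yn0 hy hlt => [|n] B y Bge0 yge0 yn0 hy hlt.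
  by move: yn0; rewrite flatmx0 eqxx.
pose mC := mu%:C.
have mCpos : 0 < mC by rewrite ltcR.
pose B' := mC^-1 *: B.
have B'ge0 : forall i j, 0 <= B' i j.
  move=> i j; rewrite mxE; apply: mulr_ge0 => //; rewrite invr_ge0; exact: ltW.
have mono : forall w : 'cV_n.+1, (forall i, y i 0 <= w i 0) ->
    forall i, (B' *m y) i 0 <= (B' *m w) i 0.
  move=> w hw i; rewrite [X in X <= _]mxE [X in _ <= X]mxE; apply: ler_sum => j _.
  exact: ler_wpM2l (B'ge0 i j) _ _ (hw j).
have base : forall i, y i 0 <= (B' *m y) i 0.
  by move=> i; rewrite -scalemxAl mxE ler_pdivlMl //; exact: hy.
have iter : forall k i, y i 0 <= (B' ^+ k *m y) i 0.
  elim=> [|k IH] i; first by rewrite expr0 mul1mx.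
  rewrite exprS -mulmxE -mulmxA.
  exact: le_trans (base i) (mono _ IH i).
have eigB' : forall a, eigenvalue B' a -> `|a| < 1.
  move=> a /eigenvalueP [v vB v0].
  have hB : v *m B = (mC * a) *: v.
    by rewrite -scalerA -vB -scalemxAr /B' scalerA mulfV ?gt_eqF // scale1r.
  have /specrad_ub h : eigenvalue B (mC * a) by apply/eigenvalueP; exists v.
  have : Normc.normc a < 1.
    rewrite -(ltr_pM2l mupos) mulr1; apply: le_lt_trans _ hlt.
    by move: h; rewrite Normc.normcM normcRC (ger0_norm mu0).
  by rewrite -normcCE (_ : (1 : C) = 1%:C) // ltcR.
have [r [hr hroots]] := eig_roots B'.
have hall : all (fun l => `|l| < 1) r.
  by apply/allP => z; rewrite -hroots; exact: eigB'.
have CH : \prod_(l <- r) (B' - l%:M) = 0.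
  have := Cayley_Hamilton B'; rewrite hr rmorph_prod /=.
  by under eq_bigr do rewrite rmorphB /= horner_mx_X horner_mx_C.
have [i0 hi0] : exists i, y i 0 != 0.
  case: (pselect (exists i, y i 0 != 0)) => // H; exfalso.
  move/eqP: yn0; apply; apply/matrixP => i j; rewrite ord1 mxE; apply/eqP.
  by apply/negPn/negP => hne; apply: H; exists i.
have ypos : 0 < y i0 0 by rewrite lt_def hi0 yge0.
have [M hM] : summ (fun k => (B' ^+ k *m y) i0 0).
  apply: (claim hall) => i; exists 0 => K.
  by rewrite big1 // => k _; rewrite CH mulr0 mul0mx mxE normr0.
have hK : forall K, K%:R * y i0 0 <= M.
  move=> K; apply: le_trans (hM K).
  have -> : K%:R * y i0 0 = \sum_(k < K) y i0 0 by rewrite sumr_const card_ord mulr_natl.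
  apply: ler_sum => k _; apply: le_trans (iter k i0) _.
  exact/real_ler_norm/ger0_real/(le_trans (yge0 i0) (iter k i0)).
have M0 : 0 <= M by have := hM 0%N; rewrite big_ord0.
have cR : y i0 0 = (complex.Re (y i0 0))%:C by rewrite RRe_real // ger0_real // ltW.
have mR : M = (complex.Re M)%:C by rewrite RRe_real // ger0_real.
set c' := complex.Re (y i0 0) in cR; set M' := complex.Re M in mR.
have c'pos : 0 < c' by rewrite -ltcR -cR.
have M'0 : 0 <= M' by rewrite -lecR -mR.
have ha := archi_boundP (divr_ge0 M'0 (ltW c'pos)).
have := hK (Num.Def.archi_bound (M' / c')).
rewrite cR mR -(rmorph_nat (real_complex R)) -rmorphM /= lecR.
rewrite ltr_pdivrMr // in ha.
by move=> h; have := lt_le_trans ha h; rewrite ltxx.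
Qed.

End PartC.

Section PartD.
Variable R : realType.
Local Notation C := (R[i]).
Variables (V : finType) (F : {set {set V}}).

Lemma sum_bidx (r : V -> nat) (G : bidx F r -> C) :
  \sum_(j < #|bidx F r|) G (enum_val j) =
  \sum_(f : dedge F) \sum_(t < r (tgt f)) G (Tagged (fun e : dedge F => 'I_(r (tgt e))) t).
Proof.
rewrite -(big_enum_val (fun x => G x)).
rewrite (@sig_big_dep _ _ _ _ (fun f : dedge F => 'I_(r (tgt f))) predT (fun _ _ => true) (fun i t => G (Tagged (fun e : dedge F => 'I_(r (tgt e))) t))).
by apply: eq_big => [[i t]|[i t] _].
Qed.

Lemma Mop_scal_entry (w : {set V} -> V -> V -> R) j k :
  Mop F (scalw w) j k =
  if nbr (tag (enum_val k)) (tag (enum_val j))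
  then (w (src (tag (enum_val j))) (tgt (tag (enum_val k))) (tgt (tag (enum_val j))))%:C
  else 0.
Proof.
rewrite mxE /=; case: ifP => // _.
by rewrite /scalw mxE !ord1 eqxx mulr1n.
Qed.


Lemma bigmax_ge0 (I : finType) (P : pred I) (G : I -> R) :
  0 <= \big[Num.max/0]_(i | P i) G i.
Proof. by elim/big_rec: _ => // i x _ hx; rewrite le_max hx orbT. Qed.

Lemma maxw_ge0 (w : {set V} -> V -> V -> R) : 0 <= maxw F w.
Proof. exact: bigmax_ge0. Qed.

Lemma maxw_ub (w : {set V} -> V -> V -> R) (e f : dedge F) : nbr f e -> w (src e) (tgt f) (tgt e) <= maxw F w.
Proof.
case/and3P => hfe hne _.
have /andP [hF he] := valP e.
apply: le_trans (le_bigmax_cond _ _ hF); rewrite -/(src e) in hF he *.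
apply: le_trans (le_bigmax_cond _ _ hfe).
apply: (le_bigmax_cond _ (fun j => w (src e) (tgt f) j)).
by rewrite /tgt he /= eq_sym.
Qed.

Lemma cV_nz n (v : 'cV[C]_n) : v != 0 -> exists i, v i 0 != 0.
Proof.
move=> vn0; case: (pselect (exists i, v i 0 != 0)) => // H; exfalso.
move/eqP: vn0; apply; apply/matrixP => i j; rewrite ord1 mxE.
by apply/eqP/negPn/negP => hne; apply: H; exists i.
Qed.

Lemma mulmx_entry m n p (A : 'M[C]_(m, n)) (B : 'M[C]_(n, p)) i k :
  (A *m B) i k = \sum_j A i j * B j k.
Proof. by rewrite mxE. Qed.

Lemma part2 (w : {set V} -> V -> V -> R) : (forall a i j, 0 <= w a i j) ->
  specrad (Mop F (scalw w)) <= maxw F w * specrad (Mop F (scalw (fun _ _ _ => 1))).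
Proof.
move=> w0.
have c0 := maxw_ge0 w.
apply: specrad_le; first by rewrite mulr_ge0 // specrad_ge0.
move=> a ha; have [x xn0 hx] := eig_col ha.
pose y : 'cV[C]_#|bidx F (fun _ => 1%N)| := \col_j `|x j 0|.
have yE : forall k, y k 0 = `|x k 0| by move=> k; rewrite mxE.
have key : forall j, (Normc.normc a)%:C * y j 0 <=
    (maxw F w)%:C * (Mop F (scalw (fun _ _ _ => 1)) *m y) j 0.
  move=> j; rewrite yE normcCE.
  have -> : `|a| * `|x j 0| = `|(Mop F (scalw w) *m x) j 0|.
    by rewrite hx mxE normrM.
  rewrite !mulmx_entry mulr_sumr; apply: le_trans (ler_norm_sum _ _ _) _.
  apply: ler_sum => k _; rewrite yE normrM !Mop_scal_entry.
  case: ifP => hn; last by rewrite normr0 !mul0r mulr0.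
  rewrite mul1r ger0_norm ?ler0c // ler_wpM2r // lecR.
  exact: maxw_ub.
have [j0 hj0] := cV_nz xn0.
have ypos : 0 < y j0 0 by rewrite yE normr_gt0.
have [c00|cpos] := eqVneq (maxw F w) 0.
  rewrite c00 mul0r; have := key j0; rewrite c00 mul0r pmulr_lle0 //.
  by rewrite (_ : (0 : C) = 0%:C) // lecR.
have cp : 0 < maxw F w by rewrite lt_def cpos.
have cC : 0 < (maxw F w)%:C by rewrite ltcR.
rewrite -ler_pdivrMl // mulrC.
apply: (specrad_lb (y := y)).
- by move=> i k; rewrite Mop_scal_entry; case: ifP => // _; rewrite ler0c /=.
- by move=> i; rewrite yE.
- apply/eqP => /matrixP /(_ j0 0); rewrite yE mxE => /eqP.
  by rewrite normr_eq0 (negPf hj0).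
- by rewrite divr_ge0 // normc_ge0.
- move=> j; rewrite -(ler_pM2l cC) mulrA -rmorphM /= mulrCA mulfV ?gt_eqF // mulr1.
  exact: key.
Qed.


Lemma part1 (r : V -> nat) (u : forall (a : {set V}) (v w : V), 'M[C]_(r w, r v))
  (N : forall v : V, 'cV[C]_(r v) -> R) (HN : forall v : V, is_vnorm (N v)) :
  specrad (Mop F u) <= specrad (Mop F (scalw (fun (a : {set V}) (v w : V) => opnorm (N v) (N w) (u a v w)))).
Proof.
pose nu := fun (a : {set V}) (v w : V) => opnorm (N v) (N w) (u a v w).
rewrite -/nu.
have nu0 : forall a v w, 0 <= nu a v w.
  by move=> a v w; case: (opnorm_spec (u a v w) (HN v) (HN w)).
have nub : forall a v w x, N w (u a v w *m x) <= nu a v w * N v x.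
  by move=> a v w; case: (opnorm_spec (u a v w) (HN v) (HN w)).
apply: specrad_le (specrad_ge0 _) _ => a ha.
have [x xn0 hx] := eig_col ha.
pose X (p : bidx F r) := x (enum_rank p) 0.
pose xb (e : dedge F) : 'cV[C]_(r (tgt e)) :=
  \col_s X (Tagged (fun e : dedge F => 'I_(r (tgt e))) s).
have key : forall e s, a * X (Tagged (fun e : dedge F => 'I_(r (tgt e))) s) =
  \sum_(f : dedge F) \sum_(t < r (tgt f))
    (if nbr f e then u (src e) (tgt f) (tgt e) s t else 0) *
      X (Tagged (fun e : dedge F => 'I_(r (tgt e))) t).
  move=> e s.
  pose p : bidx F r := Tagged (fun e : dedge F => 'I_(r (tgt e))) s.
  have h1 : (Mop F u *m x) (enum_rank p) 0 = (a *: x) (enum_rank p) 0 by rewrite hx.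
  move: h1; rewrite mulmx_entry [RHS]mxE => <-.
  rewrite -(sum_bidx (fun q => (if nbr (tag q) e then
       u (src e) (tgt (tag q)) (tgt e) s (tagged q) else 0) * X q)).
  apply: eq_bigr => j _; rewrite mxE /= enum_rankK /X enum_valK.
  by [].
have vec : forall e, a *: xb e = \sum_(f | nbr f e) u (src e) (tgt f) (tgt e) *m xb f.
  move=> e; apply/matrixP => s k; rewrite ord1 summxE.
  have -> : (a *: xb e) s 0 = a * X (Tagged (fun e : dedge F => 'I_(r (tgt e))) s).
    by rewrite !mxE.
  rewrite key [RHS]big_mkcond /=; apply: eq_bigr => f _.
  case: ifP => hn.
    by rewrite mulmx_entry; apply: eq_bigr => t _; rewrite mxE.
  by rewrite big1 // => t _; rewrite mul0r.
have ineq : forall e, Normc.normc a * N (tgt e) (xb e) <=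
    \sum_(f | nbr f e) nu (src e) (tgt f) (tgt e) * N (tgt f) (xb f).
  move=> e; rewrite -(vnZ (HN _)) vec.
  apply: le_trans (vn_sum (HN _) _ _) _; apply: ler_sum => f _; exact: nub.
pose y : 'cV[C]_#|bidx F (fun _ => 1%N)| :=
  \col_j (N (tgt (tag (enum_val j))) (xb (tag (enum_val j))))%:C.
have yE : forall j, y j 0 = (N (tgt (tag (enum_val j))) (xb (tag (enum_val j))))%:C.
  by move=> j; rewrite mxE.
have By : forall j, (Mop F (scalw nu) *m y) j 0 =
   (\sum_(f | nbr f (tag (enum_val j))) nu (src (tag (enum_val j))) (tgt f) (tgt (tag (enum_val j))) * N (tgt f) (xb f))%:C.
  move=> j; rewrite mulmx_entry.
  under eq_bigr do rewrite Mop_scal_entry yE.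
  rewrite (sum_bidx (fun q : bidx F (fun _ => 1%N) => (if nbr (tag q) (tag (enum_val j))
     then (nu (src (tag (enum_val j))) (tgt (tag q)) (tgt (tag (enum_val j))))%:C else 0) *
     (N (tgt (tag q)) (xb (tag q)))%:C)).
  rewrite rmorph_sum [RHS]big_mkcond /=; apply: eq_bigr => f _.
  rewrite big_ord1 /=; case: ifP => _; last by rewrite mul0r.
  by rewrite rmorphM.
have [j0 hj0] := cV_nz xn0.
pose p0 := enum_val j0.
pose e0 := tag p0.
have tagK : forall q : bidx F r, Tagged (fun e : dedge F => 'I_(r (tgt e))) (tagged q) = q.
  by case.
have xb0 : xb e0 (tagged p0) 0 != 0.
  by rewrite mxE /X tagK /p0 enum_valK.
have Nxb0 : N (tgt e0) (xb e0) != 0.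
  apply/eqP => /(vn_eq0 (HN _)) h; move: xb0; rewrite h mxE eqxx //.
pose q1 : bidx F (fun _ => 1%N) := existT (fun e : dedge F => 'I_1) e0 (ord0 : 'I_1).
apply: (specrad_lb (y := y)).
- by move=> i k; rewrite Mop_scal_entry; case: ifP => // _; rewrite ler0c.
- by move=> i; rewrite yE ler0c vn_ge0.
- apply/eqP => /matrixP /(_ (enum_rank q1) 0); rewrite yE mxE enum_rankK /=.
  by move=> [] /eqP; rewrite (negPf Nxb0).
- exact: normc_ge0.
- by move=> j; rewrite yE By -rmorphM lecR.
Qed.



End PartD.


Local Close Scope complex_scope.

Theorem proposition1 (R : realType) (V : finType) (F : {set {set V}})
  (r : V -> nat) (r_pos : forall v : V, (0 < r v)%N)
  (u : forall (a : {set V}) (v w : V), 'M[R[i]]_(r w, r v))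
  (N : forall v : V, 'cV[R[i]]_(r v) -> R)
  (HN : forall v : V, is_vnorm (N v)) :
  let nu := fun (a : {set V}) (v w : V) => opnorm (N v) (N w) (u a v w) in
  specrad (Mop F u) <= specrad (Mop F (scalw nu))
  /\ specrad (Mop F (scalw nu))
     <= maxw F nu * specrad (Mop F (scalw (fun _ _ _ => 1))).
Proof.
move=> nu; split.
  by have := @part1 R V F r u N HN; rewrite -/nu.
apply: part2 => a v w.
by case: (opnorm_spec (u a v w) (HN v) (HN w)).
Qed.
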